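(* Let $C$ be a linear $[n,k,2]_q$ completely regular code with covering radius $\rho=1$, and let $n_a$ be the number of codewords at distance one from any vector not in $C$. Let $A$ be a generator matrix of the repetition $[n_a,1,n_a]_q$ code. (i) If $k=n-1$, then $C$ is linearly equivalent to the code with parity-check matrix $H=A$. (ii) If $k<n-1$, then $C$ is linearly equivalent to the code with parity-check matrix $H=A\otimes B$, where $B$ is a parity-check matrix of a $q$-ary Hamming code of length $n_b=n/n_a$ (in particular such a Hamming code exists).
   Context: $\mathbb{F}_q$ is the finite field with $q$ elements; Hamming distance; covering radius $\rho=\max_{\bf v}\min_{{\bf x}\in C}d({\bf v},{\bf x})$. $C$ is completely regular if for every vector ${\bf x}$, with $t=d({\bf x},C)$, the number of codewords at distance $i$ from ${\bf x}$ depends only on $t$ and $i$ (so $n_a$ is well defined). The repetition $[n,1,n]_q$ code is $\{(c,\dots,c)\}$. For $m\ge 2$ a $q$-ary Hamming code of length $(q^m-1)/(q-1)$ is a linear code with an $m\times (q^m-1)/(q-1)$ parity-check matrix whose columns are nonzero and pairwise linearly independent. Two codes are linearly equivalent if one is the image of the other under ${\bf x}\mapsto{\bf x}M$ for a monomial matrix $M$. $A\otimes B$ denotes the Kronecker product (each entry $a_{r,s}$ of $A$ replaced by the block $a_{r,s}B$). *)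

(* Defs.v *)
From HB Require Import structures.
From mathcomp Require Import all_boot all_order all_algebra.
From mathcomp Require Export mxtens.
Set Implicit Arguments. Unset Strict Implicit. Unset Printing Implicit Defensive.
Import GRing.Theory.
Local Open Scope ring_scope.

Section Codes.
Variable F : finFieldType.

Definition hdist n (x y : 'rV[F]_n) : nat := #|[set i : 'I_n | x 0 i != y 0 i]|.

Definition is_linear_code n (C : {set 'rV[F]_n}) : Prop :=
  (0 : 'rV[F]_n) \in C /\
  forall (a : F) (x y : 'rV[F]_n), x \in C -> y \in C -> a *: x + y \in C.

Definition is_nkd_code n k d (C : {set 'rV[F]_n}) : Prop :=
  [/\ is_linear_code C, #|C| = (#|F| ^ k)%N,
      exists2 x, x \in C & exists2 y, y \in C & x != y /\ hdist x y = d
    & forall x y, x \in C -> y \in C -> x != y -> (d <= hdist x y)%N].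

(* distance from v to C (= min over codewords; n is a harmless default
   since all distances are <= n) *)
Definition dist_code n (C : {set 'rV[F]_n}) (v : 'rV[F]_n) : nat :=
  \big[minn/n]_(x in C) hdist v x.

Definition covering_radius n (C : {set 'rV[F]_n}) : nat :=
  \max_(v : 'rV[F]_n) dist_code C v.

Definition nb_at n (C : {set 'rV[F]_n}) (x : 'rV[F]_n) (i : nat) : nat :=
  #|[set c in C | hdist x c == i]|.

Definition completely_regular n (C : {set 'rV[F]_n}) : Prop :=
  forall x y : 'rV[F]_n, dist_code C x = dist_code C y ->
    forall i, nb_at C x i = nb_at C y i.

Definition pcm_code m n (H : 'M[F]_(m, n)) : {set 'rV[F]_n} :=
  [set x : 'rV[F]_n | H *m x^T == 0].

Definition gen_code k n (G : 'M[F]_(k, n)) : {set 'rV[F]_n} :=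
  [set x : 'rV[F]_n | (x <= G)%MS].

Definition repetition_code n : {set 'rV[F]_n} :=
  [set x : 'rV[F]_n | [exists c : F, x == const_mx c]].

(* monomial matrix: exactly one nonzero entry in each row and each column
   (this forces the matrix to be square) *)
Definition monomial m n (M : 'M[F]_(m, n)) : Prop :=
  (forall i, #|[set j | M i j != 0]| = 1%N) /\
  (forall j, #|[set i | M i j != 0]| = 1%N).

Definition lin_equiv n1 n2 (C1 : {set 'rV[F]_n1}) (C2 : {set 'rV[F]_n2}) : Prop :=
  exists M : 'M[F]_(n1, n2), monomial M /\ C2 = [set x *m M | x in C1].

Definition hamming_pcm m nb (B : 'M[F]_(m, nb)) : Prop :=
  [/\ (2 <= m)%N, nb = ((#|F| ^ m - 1) %/ (#|F| - 1))%N,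
      forall j, col j B != 0
    & forall j j', j != j' -> \rank (row_mx (col j B) (col j' B)) = 2%N].

End Codes.

(* Main.v *)
Require Import Defs.
From HB Require Import structures.
From mathcomp Require Import all_boot all_order all_algebra.
From mathcomp Require Import mxtens zify.
Import GRing.Theory.
Local Open Scope ring_scope.

Set Implicit Arguments. Unset Strict Implicit. Unset Printing Implicit Defensive.


Section S.
Variable F : finFieldType.

Definition par n (u v : 'rV[F]_n) : bool := [exists a : F, (a != 0) && (a *: u == v)].

Lemma parP n (u v : 'rV[F]_n) : reflect (exists2 a, a != 0 & a *: u = v) (par u v).
Proof.
apply: (iffP existsP) => [[a /andP[a0 /eqP e]]|[a a0 e]]; first by exists a.
by exists a; rewrite a0 e eqxx.
Qed.

Lemma par_sym n (u v : 'rV[F]_n) : par u v -> par v u.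
Proof.
move/parP=> [a a0 <-]; apply/parP; exists a^-1; first by rewrite invr_eq0.
by rewrite scalerA mulVf // scale1r.
Qed.

Lemma par_trans n (u v w : 'rV[F]_n) : par u v -> par v w -> par u w.
Proof.
move=> /parP[a a0 <-] /parP[b b0 <-]; apply/parP; exists (b * a).
  by rewrite mulf_neq0.
by rewrite scalerA.
Qed.

Lemma par_nz n (u v : 'rV[F]_n) : u != 0 -> par u v -> v != 0.
Proof. by move=> u0 /parP[a a0 <-]; rewrite scaler_eq0 negb_or a0. Qed.

Lemma par_refl n (u : 'rV[F]_n) : par u u.
Proof. by apply/parP; exists 1; rewrite ?oner_eq0 ?scale1r. Qed.

Lemma card_par n (u : 'rV[F]_n) : u != 0 -> #|[set v | par u v]| = #|F|.-1.
Proof.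
move=> u0.
have -> : [set v | par u v] = (fun a : F => a *: u) @: [set~ 0].
  apply/setP=> v; rewrite inE; apply/parP/imsetP => [[a a0 <-]|[a]].
    by exists a; rewrite // !inE.
  by rewrite !inE => a0 ->; exists a.
rewrite card_in_imset ?cardsC1 // => a b _ _ /eqP.
by rewrite -subr_eq0 -scalerBl scaler_eq0 (negPf u0) orbF subr_eq0 => /eqP.
Qed.

End S.


Lemma count_partition (T J : finType) (S : {set T}) (X : J -> {set T}) :
  (forall j, X j \subset S) -> (forall x, x \in S -> exists j, x \in X j) ->
  (forall j j' x, x \in X j -> x \in X j' -> j = j') ->
  #|S| = \sum_j #|X j|.
Proof.
move=> sub cov dis.
rewrite -sum1_card.
transitivity (\sum_(x in S) \sum_j (x \in X j : nat)).
  apply: eq_bigr => x xS; have [j xj] := cov x xS.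
  rewrite (bigD1 j) //= xj big1 // => j' nj; case xj': (x \in X j') => //.
  by rewrite (dis _ _ _ xj xj') eqxx in nj.
rewrite exchange_big; apply: eq_bigr => j _.
rewrite -big_mkcondr sum1_card; apply: eq_card => x /=.
by apply/andP/idP => [[]//|xj]; split => //; apply: (subsetP (sub j)).
Qed.

Lemma partition_bij (T J : finType) (X : J -> {set T}) c :
  (forall x, exists j, x \in X j) ->
  (forall j j' x, x \in X j -> x \in X j' -> j = j') ->
  (forall j, #|X j| = c) ->
  exists2 tau : 'I_c * J -> T, bijective tau & forall k j, tau (k, j) \in X j.
Proof.
move=> cov dis card.
pose tau (kj : 'I_c * J) : T := enum_val (cast_ord (esym (card kj.2)) kj.1).
have tauX k j : tau (k, j) \in X j by rewrite /tau /= enum_valP.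
exists tau => //.
have inj : injective tau.
  move=> [k j] [k' j'] e.
  have ej : j = j' by apply: (dis _ _ (tau (k, j))); rewrite // e.
  subst j'; congr (_, _).
  by move/enum_val_inj: e => /(congr1 val) /= /val_inj.
apply: (inj_card_bij inj).
rewrite card_prod card_ord -cardsT (count_partition (S := setT) (X := X))//.
- by rewrite mulnC -sum_nat_const; apply: leq_sum => j _; rewrite card.
Qed.


Lemma equiv_of (F : finFieldType) n N r1 r2 (H : 'M[F]_(n, r1)) (Q : 'M[F]_(N, r2))
  (L : 'M[F]_(r1, r2)) (L' : 'M[F]_(r2, r1)) (s : 'I_n -> 'I_N) :
  bijective s -> L *m L' = 1%:M ->
  (forall i, par (row (s i) Q) (row i H *m L)) ->
  lin_equiv [set x : 'rV_n | x *m H == 0] [set y : 'rV_N | y *m Q == 0].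
Proof.
move=> [g sK gK] LL hpar.
pose lam i := odflt 0 [pick a : F | (a != 0) && (a *: row (s i) Q == row i H *m L)].
have lamP i : lam i != 0 /\ lam i *: row (s i) Q = row i H *m L.
  have /existsP ex := hpar i.
  rewrite /lam; case: pickP => [b /andP[b0 /eqP e]|] //=.
  by move=> none; case: ex => b; rewrite none.
have lam0 i : lam i != 0 by case: (lamP i).
pose M : 'M[F]_(n, N) := \matrix_(i, j) (if s i == j then lam i else 0).
pose M' : 'M[F]_(N, n) := \matrix_(j, i) (if g j == i then (lam i)^-1 else 0).
have MQ : M *m Q = H *m L.
  apply/row_matrixP => i; rewrite !row_mul -(proj2 (lamP i)).
  apply/rowP => k; rewrite !mxE (bigD1 (s i)) //= big1 => [|j nj].
    by rewrite !mxE eqxx addr0.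
  by rewrite !mxE eq_sym (negbTE nj) mul0r.
have M'M : M' *m M = 1%:M.
  apply/matrixP => j j'; rewrite !mxE (bigD1 (g j)) //= big1 => [|i ni].
    rewrite !mxE !eqxx gK addr0; case: eqP => _; by rewrite ?mulVf ?mulr0.
  by rewrite !mxE eq_sym (negbTE ni) mul0r.
exists M; split.
  split.
    move=> i; rewrite -(cards1 (s i)); apply: eq_card => j.
    rewrite !inE mxE; case: (s i =P j) => [<-|nj]; first by rewrite eqxx lam0.
    by rewrite eqxx; apply/esym/eqP => ej; apply: nj; rewrite ej.
  move=> j; rewrite -(cards1 (g j)); apply: eq_card => i.
  rewrite !inE mxE; case: (s i =P j) => [<-|nj]; first by rewrite sK eqxx lam0.
  by rewrite eqxx; apply/esym/eqP => ei; apply: nj; rewrite ei gK.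
apply/setP => y; rewrite [in LHS]inE; apply/idP/imsetP.
  move=> /eqP yQ; exists (y *m M'); last by rewrite -mulmxA M'M mulmx1.
  rewrite inE; apply/eqP.
  by rewrite -(mulmx1 (_ *m H)) -LL !mulmxA -(mulmxA _ H) -MQ !mulmxA -(mulmxA y) M'M mulmx1 yQ mul0mx.
by move=> [x]; rewrite inE => /eqP xH ->; rewrite -mulmxA MQ mulmxA xH mul0mx.
Qed.


Section S.
Variable F : finFieldType.

Lemma card_rowspace p n (K : 'M[F]_(p, n)) :
  #|[set x : 'rV_n | (x <= K)%MS]| = (#|F| ^ \rank K)%N.
Proof.
have -> : [set x : 'rV_n | (x <= K)%MS] =
          (fun u : 'rV_(\rank K) => u *m row_base K) @: setT.
  apply/setP => x; rewrite inE; apply/idP/imsetP.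
    by rewrite -(eq_row_base K) => /submxP[u ->]; exists u.
  by move=> [u _ ->]; rewrite -(eq_row_base K) submxMl.
rewrite card_imset ?cardsT ?card_mx ?mul1n //.
exact: row_free_inj (row_base_free K).
Qed.

Lemma code_pcm n (C : {set 'rV[F]_n}) : is_linear_code C ->
  exists r (H : 'M[F]_(n, r)),
    [/\ C = [set x | x *m H == 0], row_full H & #|C| = (#|F| ^ (n - r))%N].
Proof.
move=> [C0 Clin].
have CD x y : x \in C -> y \in C -> x + y \in C.
  by move=> xC yC; have := Clin 1 x y xC yC; rewrite scale1r.
have CZ a x : x \in C -> a *: x \in C.
  by move=> xC; have := Clin a x 0 xC C0; rewrite addr0.
pose G : 'M[F]_(#|C|, n) := \matrix_(i, j) (enum_val i : 'rV_n) 0 j.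
have rowG i : row i G = enum_val i by apply/rowP => j; rewrite !mxE.
have CG x : (x \in C) = (x <= G)%MS.
  apply/idP/idP => [xC|/submxP[u ->]].
    by rewrite -(enum_rankK_in xC xC) -rowG row_sub.
  rewrite mulmx_sum_row; apply: (big_ind (fun x => x \in C)) => // i _.
  by rewrite rowG; apply: CZ; apply: enum_valP.
pose P := cokermx G.
exists (\rank P), (col_base P); split.
- apply/setP => x; rewrite inE CG submxE -/P -{1}(mulmx_base P) mulmxA.
  apply/eqP/eqP => [e|->]; last by rewrite mul0mx.
  by apply: (row_free_inj (row_base_free P)); rewrite /= e mul0mx.
- exact: col_base_full.
- suff -> : C = [set x : 'rV_n | (x <= kermx (col_base P))%MS].
    rewrite card_rowspace mxrank_ker.
    by move: (col_base_full P); rewrite /row_full => /eqP ->.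
  apply/setP => x; rewrite inE CG submxE -/P -{1}(mulmx_base P) mulmxA.
  apply/eqP/sub_kermxP => [e|->]; last by rewrite mul0mx.
  by apply: (row_free_inj (row_base_free P)); rewrite /= e mul0mx.
Qed.
End S.


Section S.
Variable F : finFieldType.

Lemma hdist_delta n (v : 'rV[F]_n) a i : a != 0 ->
  hdist v (v - a *: delta_mx 0 i) = 1%N.
Proof.
move=> a0; rewrite /hdist; apply: etrans (cards1 i); apply: eq_card => j; rewrite !inE !mxE.
rewrite eqxx /=; have [->|ne] := eqVneq j i.
  by rewrite mulr1 -[X in X != _]subr0 (inj_eq (addrI _)) eqr_opp eq_sym a0.
by rewrite mulr0 subr0 eqxx.
Qed.

Lemma code_props n k na (C : {set 'rV[F]_n}) r (H : 'M[F]_(n, r)) :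
  is_nkd_code k 2 C -> C = [set x | x *m H == 0] -> row_full H ->
  (forall v, v \notin C -> nb_at C v 1 = na) ->
  (forall i, row i H != 0) /\
  (forall u : 'rV_r, u != 0 -> #|[set i | par (row i H) u]| = na).
Proof.
move=> [_ _ _ mind] CE full nbh.
have CH x : (x \in C) = (x *m H == 0) by rewrite CE inE.
have hnz i : row i H != 0.
  apply/negP => /eqP h0.
  pose e : 'rV[F]_n := 0 - 1 *: delta_mx 0 i.
  have eC : e \in C by rewrite CH /e mulmxBl mul0mx -scalemxAl -rowE h0 scaler0 subr0.
  have C0 : (0 : 'rV_n) \in C by rewrite CH mul0mx.
  have ne : (0 : 'rV_n) != e.
    apply/eqP => /matrixP /(_ 0 i); rewrite !mxE !eqxx /= mulr1 sub0r => /eqP.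
    by rewrite eq_sym oppr_eq0 oner_eq0.
  by have := mind _ _ C0 eC ne; rewrite /e hdist_delta ?oner_eq0.
split => // u u0.
have [v vH] : exists v : 'rV_n, v *m H = u.
  by have /submxP[v ->] := submx_full u full; exists v.
have vC : v \notin C by rewrite CH vH.
rewrite -(nbh v vC) /nb_at.
pose a i := odflt 0 [pick a : F | (a != 0) && (a *: row i H == u)].
have aP i : par (row i H) u -> a i != 0 /\ a i *: row i H = u.
  rewrite /a /par => /existsP ex; case: pickP => [b /andP[b0 /eqP e]|] //=.
  by move=> none; case: ex => b; rewrite none.
have aU i b : par (row i H) u -> b *: row i H = u -> a i = b.
  move=> /aP[_ e1] e2; apply/eqP; rewrite -subr_eq0; apply/negPn/negP => nz.
  have : (a i - b) *: row i H == 0 by rewrite scalerBl e1 e2 subrr.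
  by rewrite scaler_eq0 (negbTE nz) (negbTE (hnz i)).
pose f i := v - a i *: delta_mx 0 i.
have -> : [set c in C | hdist v c == 1%N] = f @: [set i | par (row i H) u].
  apply/setP => c; rewrite !inE; apply/andP/imsetP.
    move=> [cC /eqP]; rewrite /hdist => /eqP /cards1P [i Di].
    set b := v 0 i - c 0 i.
    have b0 : b != 0 by have := set11 i; rewrite -Di inE /b subr_eq0.
    have vc : v - c = b *: delta_mx 0 i.
      apply/rowP => j; rewrite !mxE eqxx /=; have [->|ne] := eqVneq j i.
        by rewrite mulr1.
      have : j \notin [set i] by rewrite inE.
      by rewrite -Di inE negbK => /eqP ->; rewrite subrr mulr0.
    have ebu : b *: row i H = u.
      by rewrite rowE scalemxAl -vc mulmxBl vH; move: cC; rewrite CH => /eqP ->; rewrite subr0.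
    have iI : par (row i H) u by apply/parP; exists b.
    exists i; first by rewrite inE.
    by rewrite /f (aU i b iI ebu) -vc subKr.
  move=> [i]; rewrite inE => /aP[ai0 aiH] ->; split.
    by rewrite CH mulmxBl -scalemxAl -rowE aiH vH subrr.
  by rewrite hdist_delta.
rewrite card_in_imset // => i i'; rewrite !inE => /aP[ai0 _] /aP[ai0' _].
move=> e; have := congr1 (fun w : 'rV_n => (v - w) 0 i) e.
rewrite /f /= !subKr !mxE !eqxx /= mulr1.
have [//|ne] := eqVneq i' i.
by rewrite mulr0 => /eqP; rewrite (negbTE ai0).
Qed.
End S.


Section S.
Variable F : finFieldType.
Local Notation q := #|F|.

Lemma q_gt1 : (1 < q)%N.
Proof. by apply/card_gt1P; exists 0, 1; rewrite !inE eq_sym oner_eq0. Qed.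

Lemma rank_par m (u v : 'cV[F]_m) : par u^T v^T -> (\rank (row_mx u v) <= 1)%N.
Proof.
move=> /parP[a a0 e].
have -> : v = a *: u by apply: trmx_inj; rewrite -e linearZ.
have -> : row_mx u (a *: u) = u *m row_mx 1%:M (a%:M : 'M_1).
  by rewrite mul_mx_row mulmx1 mul_mx_scalar.
by apply: leq_trans (mxrankM_maxl _ _) (rank_leq_col _).
Qed.

Lemma rank_npar m (u v : 'cV[F]_m) : u != 0 -> v != 0 -> ~~ par u^T v^T ->
  \rank (row_mx u v) = 2%N.
Proof.
move=> u0 v0 npar; rewrite -mxrank_tr tr_row_mx.
suff : row_free (col_mx u^T v^T) by move/eqP.
rewrite -kermx_eq0; apply/eqP/row_matrixP => i; rewrite row0.
move: (row i _) (row_sub i (kermx (col_mx u^T v^T))) => w /sub_kermxP.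
rewrite -[w]hsubmxK mul_row_col (mx11_scalar (lsubmx w)) (mx11_scalar (rsubmx w)).
rewrite !mul_scalar_mx; set a := lsubmx w 0 0; set b := rsubmx w 0 0 => /eqP e.
have [a0|a0] := eqVneq a 0.
  move: e; rewrite a0 scale0r add0r scaler_eq0 trmx_eq0 (negbTE v0) orbF => /eqP b0.
  by rewrite b0 (raddf0 (@scalar_mx F 1)) row_mx0.
have [b0|b0] := eqVneq b 0.
  by move: e; rewrite b0 scale0r addr0 scaler_eq0 trmx_eq0 (negbTE u0) (negbTE a0).
case/negP: npar; apply/parP; exists (- a / b).
  by rewrite mulf_neq0 ?invr_eq0 // oppr_eq0.
have e' : b *: v^T = - (a *: u^T) by apply/eqP; rewrite -addr_eq0 addrC.
by apply: (scalerI b0); rewrite e' scalerA mulrCA mulfV // mulr1 scaleNr.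
Qed.

Definition bt m nb (B : 'M[F]_(m, nb)) j : 'rV_m := (col j B)^T.

Lemma proj_count m nb (b : 'I_nb -> 'rV[F]_m) :
  (forall j, b j != 0) -> (forall j j', par (b j) (b j') -> j = j') ->
  #|\bigcup_j [set w | par (b j) w]| = (nb * q.-1)%N.
Proof.
move=> b0 dis.
rewrite (count_partition (S := \bigcup_j [set w | par (b j) w])
   (X := fun j => [set w | par (b j) w])).
- rewrite (eq_bigr (fun _ => q.-1)) ?sum_nat_const ?card_ord // => j _.
  exact: card_par.
- by move=> j; apply: (bigcup_sup j).
- by move=> x /bigcupP[j _ xj]; exists j.
move=> j j' x; rewrite !inE => p1 p2; apply: dis.
exact: par_trans p1 (par_sym p2).
Qed.

Lemma proj_sub m nb (b : 'I_nb -> 'rV[F]_m) : (forall j, b j != 0) ->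
  \bigcup_j [set w | par (b j) w] \subset [set~ 0].
Proof.
move=> b0; apply/subsetP => w /bigcupP[j _]; rewrite !inE => p.
exact: par_nz p.
Qed.

Lemma card_nz m : #|[set~ (0 : 'rV[F]_m)]| = (q ^ m).-1.
Proof. by rewrite cardsC1 card_mx mul1n. Qed.

Lemma q_div m : (q.-1 %| (q ^ m).-1)%N.
Proof. by rewrite predn_exp dvdn_mulr. Qed.

Lemma hamming_props m nb (B : 'M[F]_(m, nb)) : hamming_pcm B ->
  [/\ forall j, bt B j != 0,
      forall j j', par (bt B j) (bt B j') -> j = j'
    & forall w : 'rV_m, w != 0 -> exists j, par (bt B j) w].
Proof.
move=> [m2 nbE cnz crk].
have b0 j : bt B j != 0 by rewrite /bt trmx_eq0.
have dis j j' : par (bt B j) (bt B j') -> j = j'.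
  move=> p; apply/eqP; apply: contraLR (rank_par p) => ne.
  by rewrite (crk _ _ ne).
split=> // w w0.
have : w \in \bigcup_j [set w | par (bt B j) w].
  suff -> : \bigcup_j [set w | par (bt B j) w] = [set~ 0] by rewrite !inE.
  apply/eqP; rewrite eqEcard proj_sub //= proj_count // card_nz nbE.
  by rewrite !subn1 divnK ?q_div.
by move=> /bigcupP[j _]; rewrite inE; exists j.
Qed.

End S.


Section S.
Variable F : finFieldType.
Local Notation q := #|F|.

Definition normalized m (v : 'rV[F]_m) : bool :=
  [exists i : 'I_m, (v 0 i == 1) && [forall i' : 'I_m, (i' < i)%N ==> (v 0 i' == 0)]].

Lemma norm_exists m (u : 'rV[F]_m) : u != 0 -> exists2 v, normalized v & par v u.
Proof.
move=> u0.
have [i0 ui0] : exists i, u 0 i != 0.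
  case: (pickP (fun i => u 0 i != 0)) => [i ui|none]; first by exists i.
  case/eqP: u0; apply/rowP => i; by have := none i; rewrite !mxE /= => /negbFE/eqP.
case: (@arg_minnP _ i0 (fun i => u 0 i != 0) (fun i : 'I_m => i : nat) ui0) => i ui imin.
exists ((u 0 i)^-1 *: u).
  apply/existsP; exists i; rewrite mxE mulVf // eqxx /=.
  apply/forallP => i'; apply/implyP => lt; rewrite mxE.
  rewrite mulf_eq0; apply/orP; right; apply/negPn/negP => nz.
  by have := imin _ nz; rewrite leqNgt lt.
apply/parP; exists (u 0 i) => //.
by rewrite scalerA mulfV // scale1r.
Qed.

Lemma norm_uniq m (v v' : 'rV[F]_m) :
  normalized v -> normalized v' -> par v v' -> v = v'.
Proof.
move=> /existsP[i /andP[/eqP vi /forallP vlt]].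
move=> /existsP[i' /andP[/eqP vi' /forallP vlt']].
move=> /parP[a a0 e].
have ent k : v' 0 k = a * v 0 k by rewrite -e mxE.
case: (ltngtP i i') => [lt|lt|eq].
- have := implyP (vlt' i) lt; rewrite ent vi mulr1 => /eqP a00.
  by rewrite a00 eqxx in a0.
- have := implyP (vlt i') lt => /eqP z.
  by move: vi'; rewrite ent z mulr0 => /eqP; rewrite eq_sym oner_eq0.
- have ii : i = i' by apply: val_inj.
  subst i'; move: vi'; rewrite ent vi mulr1 => a1.
  by rewrite -e a1 scale1r.
Qed.

Lemma proj_family m : exists nb (b : 'I_nb -> 'rV[F]_m),
  [/\ nb = ((q ^ m - 1) %/ (q - 1))%N, forall j, b j != 0,
      (forall j j', par (b j) (b j') -> j = j')
    & forall w, w != 0 -> exists j, par (b j) w].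
Proof.
pose R := [set v : 'rV[F]_m | normalized v].
pose b (j : 'I_#|R|) : 'rV[F]_m := enum_val j.
have bN j : normalized (b j) by have := enum_valP j; rewrite inE.
have b0 j : b j != 0.
  have /existsP[i /andP[/eqP e _]] := bN j.
  by apply/eqP => z; move: e; rewrite z mxE => /eqP; rewrite eq_sym oner_eq0.
have dis j j' : par (b j) (b j') -> j = j'.
  by move=> p; apply: enum_val_inj; apply: norm_uniq.
have cov w : w != 0 -> exists j, par (b j) w.
  move=> /norm_exists [v vN p].
  have vR : v \in R by rewrite inE.
  by exists (enum_rank_in vR v); rewrite /b enum_rankK_in.
exists #|R|, b; split => //.
have : \bigcup_j [set w | par (b j) w] = [set~ 0].
  apply/eqP; rewrite eqEsubset proj_sub //=; apply/subsetP => w.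
  by rewrite !inE => /cov[j p]; apply/bigcupP; exists j; rewrite ?inE.
move=> e; have := congr1 (fun S : {set 'rV[F]_m} => #|S|) e; rewrite /= proj_count // card_nz !subn1 => <-.
by rewrite mulnK // -subn1 subn_gt0 q_gt1.
Qed.

Lemma family_hamming m nb (b : 'I_nb -> 'rV[F]_m) :
  (2 <= m)%N -> nb = ((q ^ m - 1) %/ (q - 1))%N -> (forall j, b j != 0) ->
  (forall j j', par (b j) (b j') -> j = j') ->
  hamming_pcm (\matrix_(i, j) b j 0 i).
Proof.
move=> m2 nbE b0 dis.
have colE j : col j (\matrix_(i, j) b j 0 i) = (b j)^T.
  by apply/colP => i; rewrite !mxE.
split => // [j|j j' ne].
  by rewrite colE trmx_eq0.
rewrite !colE rank_npar ?trmx_eq0 ?trmxK //.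
by apply/negP => /dis e; rewrite e eqxx in ne.
Qed.

End S.


Section S.
Variable F : finFieldType.

Lemma par_mulmx n p (u v : 'rV[F]_n) (L : 'M_(n, p)) : par u v -> par (u *m L) (v *m L).
Proof. by move=> /parP[a a0 <-]; apply/parP; exists a; rewrite // scalemxAl. Qed.

Lemma par_scale n c (u : 'rV[F]_n) : c != 0 -> par (c *: u) u.
Proof.
by move=> c0; apply: par_sym; apply/parP; exists c.
Qed.

Lemma par_rV1 (u v : 'rV[F]_1) : u != 0 -> v != 0 -> par u v.
Proof.
move=> u0 v0.
have u00 : u 0 0 != 0 by apply: contraNneq u0 => e; apply/eqP/rowP => i; rewrite ord1 e mxE.
apply/parP; exists (v 0 0 / u 0 0).
  rewrite mulf_neq0 ?invr_eq0 //.
  by apply: contraNneq v0 => e; apply/eqP/rowP => i; rewrite ord1 e mxE.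
by apply/rowP => i; rewrite ord1 mxE mulfVK.
Qed.

Lemma core n r na (H : 'M[F]_(n, r)) nb (b : 'I_nb -> 'rV[F]_r) :
  (forall i, row i H != 0) ->
  (forall u, u != 0 -> #|[set i | par (row i H) u]| = na) ->
  (forall j, b j != 0) -> (forall j j', par (b j) (b j') -> j = j') ->
  (forall w, w != 0 -> exists j, par (b j) w) ->
  exists2 tau : 'I_na * 'I_nb -> 'I_n, bijective tau &
    forall j1 j2, par (b j2) (row (tau (j1, j2)) H).
Proof.
move=> hnz hcnt b0 dis cov.
pose X j := [set i | par (row i H) (b j)].
have c1 : forall i, exists j, i \in X j.
  move=> i; have [j p] := cov _ (hnz i); exists j; rewrite inE; exact: par_sym.
have c2 : forall j j' i, i \in X j -> i \in X j' -> j = j'.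
  move=> j j' i; rewrite !inE => p1 p2; apply: dis.
  exact: par_trans (par_sym p1) p2.
have c3 : forall j, #|X j| = na by move=> j; apply: hcnt.
have [tau tb tX] := partition_bij c1 c2 c3.
exists tau => // j1 j2; have := tX j1 j2; rewrite inE; exact: par_sym.
Qed.

Definition Lmx r : 'M[F]_(r, 1 * r) :=
  \matrix_(i, k) ((mxtens_index ((0 : 'I_1), i) == k)%:R).
Definition L'mx r : 'M[F]_(1 * r, r) :=
  \matrix_(k, i) (((mxtens_unindex k).2 == i)%:R).

Lemma LL' r : Lmx r *m L'mx r = 1%:M.
Proof.
apply/matrixP => i i'; rewrite !mxE (bigD1 (mxtens_index ((0 : 'I_1), i))) //=.
rewrite big1 => [|k nk]; last by rewrite !mxE eq_sym (negbTE nk) mul0r.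
by rewrite !mxE eqxx mul1r mxtens_indexK addr0.
Qed.

Lemma rowQ na m nb (A : 'M[F]_(1, na)) (B : 'M[F]_(m, nb)) j1 j2 :
  row (mxtens_index (j1, j2)) (A *t B)^T = A 0 j1 *: ((col j2 B)^T *m Lmx m).
Proof.
apply/rowP => k; rewrite -[k]mxtens_unindexK; case: (mxtens_unindex k) => k1 k2.
rewrite mxE [in LHS]mxE tensmxE [in RHS]mxE ord1; congr (_ * _); rewrite mxE.
rewrite (bigD1 k2) //= big1 => [|i ni]; last first.
  rewrite !mxE; case: eqP => [e|]; last by rewrite mulr0.
  by move/(can_inj (@mxtens_indexK 1 m)): e => [e]; rewrite e eqxx in ni.
by rewrite !mxE eqxx mulr1 addr0.
Qed.

End S.

Unset Implicit Arguments.
Theorem proposition3p11 (F : finFieldType) (n k na : nat)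
  (C : {set 'rV[F]_n}) (A : 'M[F]_(1, na)) :
  is_nkd_code k 2 C ->
  completely_regular C ->
  covering_radius C = 1%N ->
  (forall v : 'rV[F]_n, v \notin C -> nb_at C v 1 = na) ->
  gen_code A = repetition_code F na ->
  ((k = n.-1)%N -> lin_equiv C (pcm_code A)) /\
  ((k < n.-1)%N ->
     [/\ (na %| n)%N,
         exists m (B : 'M[F]_(m, n %/ na)), hamming_pcm B
       & forall m (B : 'M[F]_(m, n %/ na)), hamming_pcm B ->
           lin_equiv C (pcm_code (A *t B))]).
Proof.
move=> code _ _ nbh genA.
have lin : is_linear_code C by case: code.
have [r [H [CE full cardC]]] := code_pcm lin.
have [hnz hcnt] := code_props code CE full nbh.
have n0 : (0 < n)%N.
  case: code => _ _ [x _ [y _ [nxy _]]] _; move: x y nxy; case: (n) => // x y.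
  by rewrite (thinmx0 x) (thinmx0 y) eqxx.
have rn : (r <= n)%N by move: full; rewrite /row_full => /eqP <-; apply: rank_leq_row.
have kE : k = (n - r)%N.
  case: code => _ ck _ _; apply: (expnI (q_gt1 F)); by rewrite -ck cardC.
have A0 j : A 0 j != 0.
  have : const_mx 1 \in gen_code A by rewrite genA inE; apply/existsP; exists 1.
  rewrite inE => /sub_rVP [a e]; have := congr1 (fun w : 'rV_na => w 0 j) e.
  rewrite !mxE => e1; apply/eqP => z; move: e1; rewrite z mulr0 => /eqP.
  by rewrite oner_eq0.
split.
  move=> kn1.
  have r1 : r = 1%N by move: kn1; rewrite kE; lia.
  subst r.
  have c10 : const_mx 1 != 0 :> 'rV[F]_1.
    by apply/eqP => /rowP /(_ 0); rewrite !mxE => /eqP; rewrite oner_eq0.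
  have nna : n = na.
    rewrite -(hcnt _ c10) -[n in LHS]card_ord -cardsT; apply: eq_card => i.
    by rewrite !inE par_rV1.
  have -> : pcm_code A = [set y | y *m A^T == 0].
    by apply/setP => y; rewrite !inE -trmx_eq0 trmx_mul trmxK.
  rewrite CE; apply: (equiv_of (L := 1%:M) (L' := 1%:M) (s := cast_ord nna)).
  - by exists (cast_ord (esym nna)); [exact: cast_ordK | exact: cast_ordKV].
  - by rewrite mulmx1.
  - move=> i; rewrite mulmx1; apply: par_rV1 => //.
    by apply/eqP => /rowP /(_ 0); rewrite !mxE; apply/eqP; apply: A0.
move=> kn.
have r2 : (2 <= r)%N by move: kn; rewrite kE; lia.
have [nb0 [b [nbE b0 dis bcov]]] := proj_family F r.
have [tau tbij tpar] := core hnz hcnt b0 dis bcov.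
have nE : n = (na * nb0)%N by have := bij_eq_card tbij; rewrite card_prod !card_ord.
have na0 : (0 < na)%N by move: n0; rewrite nE muln_gt0 => /andP[].
have nbna : (n %/ na)%N = nb0 by rewrite nE mulKn.
split.
- by rewrite nE dvdn_mulr.
- exists r, (\matrix_(i, j) b (cast_ord nbna j) 0 i).
  apply: family_hamming => //; first by rewrite nbna.
  by move=> j j' /dis /(congr1 val) /= e; apply: val_inj.
move=> m B hB.
have [bB0 bBdis bBcov] := hamming_props hB.
have mr : m = r.
  case: hB => _ nbm _ _.
  have e : ((#|F| ^ m - 1) %/ (#|F| - 1) = (#|F| ^ r - 1) %/ (#|F| - 1))%N.
    by rewrite -nbm nbna nbE.
  apply: (expnI (q_gt1 F)).
  have := congr1 (muln^~ (#|F| - 1)%N) e; rewrite /= !subn1 !divnK ?q_div //.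
  by move=> /(congr1 S); rewrite !prednK // expn_gt0 (ltnW (q_gt1 F)).
subst m.
have [tau2 [g tK gK] tpar2] := core hnz hcnt bB0 bBdis bBcov.
have -> : pcm_code (A *t B) = [set y | y *m (A *t B)^T == 0].
  by apply/setP => y; rewrite !inE -trmx_eq0 trmx_mul trmxK.
rewrite CE.
apply: (equiv_of (L := Lmx F r) (L' := L'mx F r) (s := fun i => mxtens_index (g i))).
- exists (fun j => tau2 (mxtens_unindex j)) => i /=.
    by rewrite mxtens_indexK gK.
  by rewrite tK mxtens_unindexK.
- exact: LL'.
move=> i; have := tpar2 (g i).1 (g i).2; rewrite -surjective_pairing gK => p.
rewrite [g i]surjective_pairing rowQ.
exact: par_trans (par_scale _ (A0 _)) (par_mulmx _ p).
Qed.
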